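(* Let $R$ and $S$ be commutative rings with identity, $f:R\to S$ a ring homomorphism, and $J$ a nonzero proper ideal of $S$. Then $R\bowtie^f J$ is a pm-ring if and only if $R$ is a pm-ring and, for every prime ideal $\mathfrak{q}$ of $S$ with $J\not\subseteq\mathfrak{q}$, the following equality holds: $$\big\lvert \big(\operatorname{Max}(S)\cap V(\mathfrak{q})\big)\setminus V(J)\big\rvert + \big\lvert \operatorname{Max}(R)\cap V\big(f^{-1}(\mathfrak{q}+J)\big)\big\rvert = 1.$$
   Context: The amalgamation of $R$ with $S$ along $J$ with respect to $f$ is the subring $R\bowtie^f J:=\{(r,f(r)+j)\mid r\in R,\ j\in J\}$ of $R\times S$. A commutative ring is a pm-ring if every prime ideal is contained in a unique maximal ideal. For a commutative ring $A$ and an ideal $I$ of $A$, $\operatorname{Max}(A)$ denotes the set of maximal ideals of $A$ and $V(I)$ the set of prime ideals of $A$ containing $I$ (so $V(R)=\emptyset$). *)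

(* Defs.v *)
From HB Require Import structures.
From mathcomp Require Import all_boot all_algebra.
From mathcomp Require Import boolp classical_sets cardinality.
From mathcomp Require Import ring.
Set Implicit Arguments. Unset Strict Implicit. Unset Printing Implicit Defensive.
Import GRing.Theory.
Local Open Scope ring_scope.
Local Open Scope classical_set_scope.
Local Open Scope card_scope.

Definition is_ideal (T : comNzRingType) (I : set T) : Prop :=
  [/\ I 0, (forall x y, I x -> I y -> I (x - y)) & (forall a x, I x -> I (a * x))].

Definition proper_ideal (T : comNzRingType) (I : set T) : Prop :=
  is_ideal I /\ ~ I 1.

Definition prime_ideal (T : comNzRingType) (P : set T) : Prop :=
  proper_ideal P /\ (forall x y, P (x * y) -> P x \/ P y).

Definition maximal_ideal (T : comNzRingType) (M : set T) : Prop :=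
  proper_ideal M /\ (forall K : set T, is_ideal K -> M `<=` K -> K = M \/ K = setT).

Definition Max (T : comNzRingType) : set (set T) := [set M | maximal_ideal M].
Definition V (T : comNzRingType) (I : set T) : set (set T) :=
  [set P | prime_ideal P /\ I `<=` P].

Definition pm_ring (T : comNzRingType) : Prop :=
  forall P : set T, prime_ideal P -> exists! M : set T, maximal_ideal M /\ P `<=` M.

Definition ideal_sum (T : comNzRingType) (I K : set T) : set T :=
  [set x | exists a b, I a /\ K b /\ x = a + b].

Definition card_is (T : Type) (A : set T) (n : nat) : Prop := A #= `I_n.

(* Amalgamation R ⋈^f J := {(r, f r + j) | r in R, j in J} ⊆ R × S *)
Record ideal_of (S : comNzRingType) := IdealOf {
  ideal_set :> set S; ideal_ax : is_ideal ideal_set }.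

Section Amalgamation.
Variables (R S : comNzRingType) (f : {rmorphism R -> S}) (J : ideal_of S).

Definition amalg_pred : pred (R * S)%type := fun x => `[< ideal_set J (x.2 - f x.1) >].

Lemma amalg_subring_closed : subring_closed amalg_pred.
Proof.
have [J0 JB JM] := ideal_ax J.
have JN : forall y, ideal_set J y -> ideal_set J (- y) by move=> y Jy; rewrite -sub0r; exact: JB.
have JD : forall x y, ideal_set J x -> ideal_set J y -> ideal_set J (x + y).
  by move=> x y Jx Jy; rewrite -(opprK y); apply: JB => //; exact: JN.
split.
- by rewrite unfold_in; apply/asboolP; rewrite /= rmorph1 subrr.
- move=> [a b] [c d]; rewrite !unfold_in => /asboolP /= H1 /asboolP /= H2.
  apply/asboolP => /=.
  have -> : b - d - f (a - c) = (b - f a) - (d - f c).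
    by rewrite rmorphB /=; ring.
  exact: JB.
- move=> [a b] [c d]; rewrite !unfold_in => /asboolP /= H1 /asboolP /= H2.
  apply/asboolP => /=.
  have -> : b * d - f (a * c) = b * (d - f c) + f c * (b - f a).
    by rewrite rmorphM /=; ring.
  by apply: JD; apply: JM.
Qed.

HB.instance Definition _ := GRing.isSubringClosed.Build (R * S)%type amalg_pred
  amalg_subring_closed.

Record amalg := Amalg { amalg_val :> (R * S)%type; _ : amalg_pred amalg_val }.

HB.instance Definition _ := [isSub for amalg_val].
HB.instance Definition _ := [Choice of amalg by <:].
HB.instance Definition _ := [SubChoice_isSubComNzRing of amalg by <:].

End Amalgamation.

Notation "R '⋈[' f ']' J" := (@amalg R _ f J) (at level 40, f at level 0).

(* Main.v *)
Require Import Defs.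
From HB Require Import structures.
From mathcomp Require Import all_boot all_algebra.
From mathcomp Require Import boolp classical_sets cardinality functions.
From mathcomp Require Import ring.
Import GRing.Theory.
Local Open Scope ring_scope.
Local Open Scope classical_set_scope.
Section Ideals.
Context {T : comNzRingType}.
Implicit Types (I M : set T).

Lemma id0 I : is_ideal I -> I 0.
Proof. by case. Qed.
Lemma idB I x y : is_ideal I -> I x -> I y -> I (x - y).
Proof. by case=> _ h _; apply: h. Qed.
Lemma idM I a x : is_ideal I -> I x -> I (a * x).
Proof. by case=> _ _ h; apply: h. Qed.
Lemma idMr I a x : is_ideal I -> I x -> I (x * a).
Proof. by move=> hI hx; rewrite mulrC; apply: idM. Qed.
Lemma idN I x : is_ideal I -> I x -> I (- x).
Proof. by move=> hI hx; rewrite -sub0r; apply: idB => //; apply: id0. Qed.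
Lemma idD I x y : is_ideal I -> I x -> I y -> I (x + y).
Proof. by move=> hI hx hy; rewrite -(opprK y); apply: idB => //; apply: idN. Qed.

Lemma maxIdC M : maximal_ideal M <->
  Defs.proper_ideal M /\ (forall z, ~ M z -> exists a, M (1 - a * z)).
Proof.
split.
- move=> [[Mi M1] Mmax]; split => // z Mz.
  pose K := [set x | exists q a, M q /\ x = q + a * z].
  have Ki : is_ideal K.
    split.
    + by exists 0, 0; split; [exact: id0 | ring].
    + move=> x y [q1 [a1 [Mq1 ->]]] [q2 [a2 [Mq2 ->]]].
      exists (q1 - q2), (a1 - a2); split; first exact: idB.
      by ring.
    + move=> b x [q [a [Mq ->]]]; exists (b * q), (b * a); split; first exact: idM.
      by ring.
  have MK : M `<=` K by move=> x Mx; exists x, 0; split => //; ring.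
  case: (Mmax K Ki MK) => KM.
  + exfalso; apply: Mz; rewrite -KM; exists 0, 1; split; [exact: id0 | ring].
  + have : K 1 by rewrite KM.
    move=> [q [a [Mq e]]]; exists a.
    by have -> : 1 - a * z = q by rewrite e; ring.
- move=> [[Mi M1] H]; split => // K Ki MK.
  case: (pselect (exists z, K z /\ ~ M z)) => [[z [Kz Mz]]|nz].
  + right; apply/seteqP; split => // x _.
    have [a Ma] := H z Mz.
    have K1 : K 1.
      have -> : (1 : T) = (1 - a * z) + a * z by ring.
      by apply: idD => //; [apply: MK | apply: idM].
    by rewrite -(mulr1 x); apply: idM.
  + left; apply/seteqP; split => // x Kx; apply: contrapT => Mx; apply: nz; exists x; done.
Qed.

Lemma max_prime M : maximal_ideal M -> prime_ideal M.
Proof.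
move=> hM; have [[Mi M1] H] := (proj1 (maxIdC M) hM).
split => // x y Mxy.
case: (pselect (M x)) => [|Mx]; first by left.
case: (pselect (M y)) => [|My]; first by right.
exfalso; have [a Ma] := H x Mx; have [b Mb] := H y My.
apply: M1.
have -> : (1 : T) = (1 - a * x) + a * x * (1 - b * y) + (a * b) * (x * y) by ring.
apply: idD => //; [apply: idD => //|]; [apply: idM .. ] => //.
Qed.

Lemma prime_proper I : prime_ideal I -> Defs.proper_ideal I.
Proof. by case. Qed.

End Ideals.
Arguments max_prime {T M}.
Arguments id0 {T I}.
Arguments idB {T I x y}.
Arguments idM {T I} a {x}.
Arguments idMr {T I} a {x}.
Arguments idN {T I x}.
Arguments idD {T I x y}.
Lemma card_is1 T (X : set T) : card_is X 1 -> exists a, X a /\ forall b, X b -> b = a.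
Proof.
move=> /card_set_bijP [g [gf gi gs]].
have [a Xa _] : (g @` X) 0%N by apply: gs; rewrite /=.
exists a; split => // b Xb; apply: gi; rewrite ?inE //.
have := gf _ Xa; have := gf _ Xb; rewrite /= => h1 h2.
by case: (g b) h1 => // ; case: (g a) h2.
Qed.

Lemma card_is0 T (X : set T) : card_is X 0 -> forall b, ~ X b.
Proof.
by rewrite /card_is II0 card_eq0 => /eqP -> b.
Qed.

Lemma card_is1' T (X : set T) a : X = [set a] -> card_is X 1.
Proof. move=> ->; exact: card_set1. Qed.

Lemma card_is0' T (X : set T) : (forall b, ~ X b) -> card_is X 0.
Proof.
move=> h; rewrite /card_is II0 card_eq0; apply/eqP; apply/seteqP; split => // x /h.
Qed.
Section Amal.
Context {R S : comNzRingType} {f : {rmorphism R -> S}} {J : ideal_of S}.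
Local Notation A := (amalg f J).
Local Notation JJ := (ideal_set J).

Definition p1 (x : A) : R := (val x).1.
Definition p2 (x : A) : S := (val x).2.

Lemma p1M x y : p1 (x * y) = p1 x * p1 y. Proof. by rewrite /p1 rmorphM. Qed.
Lemma p2M x y : p2 (x * y) = p2 x * p2 y. Proof. by rewrite /p2 rmorphM. Qed.
Lemma p1B x y : p1 (x - y) = p1 x - p1 y. Proof. by rewrite /p1 rmorphB. Qed.
Lemma p2B x y : p2 (x - y) = p2 x - p2 y. Proof. by rewrite /p2 rmorphB. Qed.
Lemma p11 : p1 1 = 1. Proof. by rewrite /p1 rmorph1. Qed.
Lemma p21 : p2 1 = 1. Proof. by rewrite /p2 rmorph1. Qed.
Lemma p10 : p1 0 = 0. Proof. by rewrite /p1 rmorph0. Qed.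
Lemma p20 : p2 0 = 0. Proof. by rewrite /p2 rmorph0. Qed.

Lemma JI : is_ideal JJ. Proof. exact: ideal_ax. Qed.

Lemma memA (x : A) : JJ (p2 x - f (p1 x)).
Proof. by have := valP x; rewrite /amalg_pred => /asboolP. Qed.

Lemma exA r s : JJ (s - f r) -> exists x : A, p1 x = r /\ p2 x = s.
Proof.
move=> h.
have hp : amalg_pred f J (r, s) by apply/asboolP.
by exists (Amalg hp).
Qed.

Lemma A_ext (x y : A) : p1 x = p1 y -> p2 x = p2 y -> x = y.
Proof.
move=> h1 h2; apply: val_inj; move: h1 h2; rewrite /p1 /p2.
by case: (val x) => a b; case: (val y) => c d /= -> ->.
Qed.

Lemma ex0 j : JJ j -> exists x : A, p1 x = 0 /\ p2 x = j.
Proof. by move=> h; apply: exA; rewrite rmorph0 subr0. Qed.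

Lemma exf r : exists x : A, p1 x = r /\ p2 x = f r.
Proof. by apply: exA; rewrite subrr; apply: id0 JI. Qed.

Definition C (P : set A) := forall x : A, p1 x = 0 -> P x.
Definition lift1 (I : set R) : set A := [set x | I (p1 x)].
Definition lift2 (Q : set S) : set A := [set x | Q (p2 x)].
Definition proj (M : set A) : set R := [set r | exists x, M x /\ p1 x = r].

Lemma lift1_ideal I : is_ideal I -> is_ideal (lift1 I).
Proof.
move=> hI; split; rewrite /lift1 /=.
- by rewrite p10; apply: id0.
- by move=> x y hx hy; rewrite p1B; apply: idB.
- by move=> a x hx; rewrite p1M; apply: idM.
Qed.

Lemma lift2_ideal I : is_ideal I -> is_ideal (lift2 I).
Proof.
move=> hI; split; rewrite /lift2 /=.
- by rewrite p20; apply: id0.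
- by move=> x y hx hy; rewrite p2B; apply: idB.
- by move=> a x hx; rewrite p2M; apply: idM.
Qed.

Lemma lift1_prime I : prime_ideal I -> prime_ideal (lift1 I).
Proof.
move=> [[hI h1] hp]; split; first split.
- exact: lift1_ideal.
- by rewrite /lift1 /= p11.
- by move=> x y; rewrite /lift1 /= p1M => /hp.
Qed.

Lemma lift2_prime I : prime_ideal I -> prime_ideal (lift2 I).
Proof.
move=> [[hI h1] hp]; split; first split.
- exact: lift2_ideal.
- by rewrite /lift2 /= p21.
- by move=> x y; rewrite /lift2 /= p2M => /hp.
Qed.

Lemma lift1_max m : maximal_ideal m -> maximal_ideal (lift1 m).
Proof.
move=> /maxIdC [[hI h1] H]; apply/maxIdC; split; first split.
- exact: lift1_ideal.
- by rewrite /lift1 /= p11.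
- move=> z; rewrite /lift1 /= => /H [a ha].
  have [b [b1 _]] := exf a.
  by exists b; rewrite p1B p11 p1M b1.
Qed.

Lemma lift2_max Q j : maximal_ideal Q -> JJ j -> ~ Q j -> maximal_ideal (lift2 Q).
Proof.
move=> hQ hj Qj.
have [[hI h1] hp] := max_prime hQ.
move: hQ => /maxIdC [_ H]; apply/maxIdC; split; first split.
- exact: lift2_ideal.
- by rewrite /lift2 /= p21.
- move=> z; rewrite /lift2 /= => hz.
  have : ~ Q (j * p2 z) by case/hp.
  move=> /H [a ha].
  have [b [b1 b2]] := ex0 _ (idM a (JI) hj).
  by exists b; rewrite p2B p21 p2M b2 -mulrA.
Qed.

Lemma C_lift1 p : is_ideal p -> C (lift1 p).
Proof. by move=> hp x; rewrite /lift1 /= => ->; apply: id0. Qed.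

Lemma notC_lift2 Q j : JJ j -> ~ Q j -> ~ C (lift2 Q).
Proof. by move=> hj Qj hC; have [x [x1 x2]] := ex0 _ hj; apply: Qj; rewrite -x2; apply: hC. Qed.

Lemma C_p1 M x y : is_ideal M -> C M -> p1 x = p1 y -> M x -> M y.
Proof.
move=> hM hC e Mx.
have -> : y = x - (x - y) by rewrite opprB addrC subrK.
apply: idB => //; apply: hC; by rewrite p1B e subrr.
Qed.

Lemma C_lift M : is_ideal M -> C M -> M = lift1 (proj M).
Proof.
move=> hM hC; apply/seteqP; split => x; rewrite /lift1 /proj /=.
- by move=> Mx; exists x.
- by move=> [y [My e]]; apply: C_p1 My.
Qed.

Lemma proj_ideal M : is_ideal M -> is_ideal (proj M).
Proof.
move=> hM; split; rewrite /proj /=.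
- by exists 0; split; [apply: id0 | apply: p10].
- by move=> _ _ [x [Mx <-]] [y [My <-]]; exists (x - y); split; [apply: idB | apply: p1B].
- move=> a _ [x [Mx <-]]; have [b [b1 _]] := exf a.
  by exists (b * x); split; [apply: idM | rewrite p1M b1].
Qed.

Lemma C_max M : maximal_ideal M -> C M -> maximal_ideal (proj M).
Proof.
move=> /maxIdC [[hM M1] H] hC; apply/maxIdC; split; first split.
- exact: proj_ideal.
- move=> [x [Mx x1]]; apply: M1; apply: (C_p1 _ _ _ hM hC _ Mx); by rewrite x1 p11.
- move=> z hz; have [y [y1 _]] := exf z.
  have My : ~ M y by move=> My; apply: hz; exists y.
  have [b Mb] := H y My.
  exists (p1 b); exists (1 - b * y); split => //.
  by rewrite p1B p11 p1M y1.
Qed.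

Lemma proj_lift1 m : proj (lift1 m) = m.
Proof.
apply/seteqP; split => r; rewrite /proj /lift1 /=.
- by move=> [x [mx <-]].
- by move=> mr; have [x [x1 _]] := exf r; exists x; rewrite x1.
Qed.

Lemma C_prime P : prime_ideal P -> C P -> prime_ideal (proj P).
Proof.
move=> [[hP P1] hp] hC; rewrite (C_lift _ hP hC) in hp P1.
split; first split.
- exact: proj_ideal.
- by move: P1; rewrite /lift1 /= p11.
- move=> r s h.
  have [x [x1 _]] := exf r; have [y [y1 _]] := exf s.
  have := hp x y; rewrite /lift1 /= p1M x1 y1 => /(_ h).
  by case; [left|right].
Qed.

Lemma notC_prime P : prime_ideal P -> ~ C P ->
  exists q j, prime_ideal q /\ JJ j /\ ~ q j /\ P = lift2 q.
Proof.
move=> [[hP P1] hp] nC.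
have [x0 [x01 Px0]] : exists x0, p1 x0 = 0 /\ ~ P x0.
  apply: contrapT => h; apply: nC => x x1; apply: contrapT => Px; apply: h; by exists x.
pose j := p2 x0.
have hj : JJ j by have := memA x0; rewrite x01 rmorph0 subr0.
pose q := [set s | exists x, P x /\ p1 x = 0 /\ p2 x = s * j].
have zz : forall s, exists z : A, p1 z = 0 /\ p2 z = s * j.
  by move=> s; apply: ex0; apply: idM JI hj.
have qE : forall s z, p1 z = 0 -> p2 z = s * j -> q s -> P z.
  move=> s z z1 z2 [x [Px [x1 x2]]].
  by have <- : x = z by apply: A_ext; rewrite ?x1 ?z1 ?x2 ?z2.
have qI : is_ideal q.
  split.
  - by exists 0; split; [apply: id0 | rewrite p10 p20 mul0r].
  - move=> s1 s2 [x [Px [x1 x2]]] [y [Py [y1 y2]]].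
    exists (x - y); split; first exact: idB.
    by rewrite p1B p2B x1 y1 x2 y2 subrr mulrBl.
  - move=> a s qs.
    have [zs [zs1 zs2]] := zz s.
    have Pzs := qE _ _ zs1 zs2 qs.
    have [w [w1 w2]] := ex0 _ (idM a JI hj).
    have [z' [z'1 z'2]] := zz (a * s).
    exists z'; split => //.
    have : P (z' * x0).
      have -> : z' * x0 = w * zs.
        apply: A_ext; [by rewrite !p1M z'1 w1 !mul0r | by rewrite !p2M z'2 w2 zs2 /j; ring].
      exact: idM.
    by case/hp.
exists q, j; split; last split => //; last split.
- split; first split => //.
  + move=> [x [Px [x1 x2]]]; apply: Px0.
    have <- // : x = x0 by apply: A_ext; rewrite ?x1 ?x01 // x2 mul1r.
  + move=> s t qst.
    have [zs [zs1 zs2]] := zz s; have [zt [zt1 zt2]] := zz t.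
    have [z [z1 z2]] := zz (s * t).
    have Pz := qE _ _ z1 z2 qst.
    have : P (zs * zt).
      have -> : zs * zt = z * x0.
        apply: A_ext; [by rewrite !p1M zs1 zt1 z1 !mul0r | by rewrite !p2M zs2 zt2 z2 /j; ring].
      exact: idMr.
    case/hp => h; [left|right]; by eexists; split; [exact: h|split].
- move=> [x [Px [x1 x2]]]; apply: Px0.
  have : P (x0 * x0).
    have <- // : x = x0 * x0 by apply: A_ext; [rewrite p1M x1 x01 mul0r | rewrite p2M x2].
  by case/hp.
- apply/seteqP; split => x; rewrite /lift2 /=.
  + move=> Px; exists (x * x0); split; first exact: idMr.
    by rewrite p1M p2M x01 mulr0.
  + move=> qx; have : P (x * x0) by apply: (qE (p2 x)) => //; rewrite ?p1M ?p2M ?x01 ?mulr0.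
    by case/hp.
Qed.


Lemma lift2_sub Q1 Q2 j : is_ideal Q1 -> prime_ideal Q2 -> JJ j -> ~ Q2 j ->
  lift2 Q1 `<=` lift2 Q2 -> Q1 `<=` Q2.
Proof.
move=> h1 [[h2 _] hp] hj Qj sub s Q1s.
have [z [z1 z2]] := ex0 _ (idM s JI hj).
have : lift2 Q2 z by apply: sub; rewrite /lift2 /= z2; apply: idMr.
by rewrite /lift2 /= z2 => /hp [].
Qed.

Lemma lift2_max_inv Q j : prime_ideal Q -> JJ j -> ~ Q j ->
  maximal_ideal (lift2 Q) -> maximal_ideal Q.
Proof.
move=> [[hQ Q1] hp] hj Qj /maxIdC [_ H]; apply/maxIdC; split; first by split.
move=> z Qz.
have Qzj : ~ Q (z * j) by case/hp.
have [y [y1 y2]] := ex0 _ (idM z JI hj).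
have : ~ lift2 Q y by rewrite /lift2 /= y2.
move=> /H [b]; rewrite /lift2 /= p2B p21 p2M y2 => hb.
exists (p2 b * j).
by have -> : 1 - p2 b * j * z = 1 - p2 b * (z * j) by ring.
Qed.

Lemma lift2_sub_lift1 q m : is_ideal q -> f @^-1` (ideal_sum q JJ) `<=` m ->
  lift2 q `<=` lift1 m.
Proof.
move=> hq sub x; rewrite /lift2 /lift1 /= => qx; apply: sub.
exists (p2 x), (f (p1 x) - p2 x); split => //; split; last by rewrite addrC subrK.
by rewrite -opprB; apply: idN JI _; apply: memA.
Qed.

Lemma C_sub q M : is_ideal M -> C M -> lift2 q `<=` M ->
  f @^-1` (ideal_sum q JJ) `<=` proj M.
Proof.
move=> hM hC sub r [a [b [qa [Jb e]]]].
have [x [x1 x2]] : exists x : A, p1 x = r /\ p2 x = a.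
  apply: exA; have -> : a - f r = - b by rewrite e; ring.
  exact: idN JI _.
exists x; split => //; apply: sub; by rewrite /lift2 /= x2.
Qed.

End Amal.

Arguments lift1_prime {R S f J I}.
Arguments lift2_prime {R S f J I}.
Arguments lift1_max {R S f J m}.
Arguments lift2_max {R S f J Q j}.
Arguments C_lift1 {R S f J p}.
Arguments notC_lift2 {R S f J Q j}.
Arguments C_lift {R S f J M}.
Arguments C_max {R S f J M}.
Arguments C_prime {R S f J P}.
Arguments notC_prime {R S f J P}.
Arguments lift2_sub {R S f J Q1 Q2 j}.
Arguments lift2_max_inv {R S f J Q j}.
Arguments lift2_sub_lift1 {R S f J q m}.
Arguments C_sub {R S f J q M}.
Theorem theorem3p4 (R S : comNzRingType) (f : {rmorphism R -> S}) (J : ideal_of S)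
  (J_nonzero : exists x, ideal_set J x /\ x <> 0) (J_proper : ~ ideal_set J 1) :
  pm_ring (amalg f J) <->
  (pm_ring R /\
   forall q : set S, prime_ideal q -> ~ (ideal_set J `<=` q) ->
     exists n m : nat,
       card_is ((@Max S `&` V q) `\` V (ideal_set J)) n /\
       card_is (@Max R `&` V (f @^-1` ideal_sum q J)) m /\
       (n + m)%N = 1%N).
Proof.
have Jneg : forall q : set S, ~ (ideal_set J `<=` q) -> exists j, ideal_set J j /\ ~ q j.
  move=> q h; apply: contrapT => nj; apply: h => j Jj; apply: contrapT => qj; apply: nj; by exists j.
split.
- move=> H; split.
  + move=> p hp.
    have [M [[Mmax PM] Mu]] := H _ (lift1_prime hp).
    have hC : C M := fun x x1 => PM x (C_lift1 hp.1.1 x x1).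
    exists (proj M); split.
    * split; first exact: C_max.
      move=> r pr; have [x [x1 _]] := exf (f:=f) (J:=J) r; exists x; split => //; apply: PM; by rewrite /lift1 /= x1.
    * move=> m' [m'max pm'].
      have e : M = lift1 m'.
        apply: Mu; split; first exact: lift1_max.
        by move=> x; rewrite /lift1 /=; apply: pm'.
      by rewrite e proj_lift1.
  + move=> q hq nJ.
    have [j [Jj qj]] := Jneg q nJ.
    have [M [[Mmax PM] Mu]] := H _ (lift2_prime hq).
    case: (pselect (C M)) => hC.
    * exists 0%N, 1%N; split; last split => //.
      - apply: card_is0' => Q [[Qmax [Qp qQ]] nJQ].
        have [j' [Jj' Qj']] := Jneg Q (fun s => nJQ (conj Qp s)).
        have e : M = lift2 Q.
          apply: Mu; split; first exact: lift2_max Qmax Jj' Qj'.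
          by move=> x; rewrite /lift2 /=; apply: qQ.
        by move: (notC_lift2 (f:=f) Jj' Qj'); rewrite -e.
      - apply: (card_is1' _ _ (proj M)); apply/seteqP; split.
        + move=> m' [m'max [m'p sub]].
          have e : M = lift1 m'.
            apply: Mu; split; first exact: lift1_max.
            exact: lift2_sub_lift1 hq.1.1 sub.
          by rewrite /= e proj_lift1.
        + move=> _ ->; split; first exact: C_max.
          split; first exact: max_prime (C_max Mmax hC).
          exact: C_sub Mmax.1.1 hC PM.
    * have Mp := max_prime Mmax.
      have [Q' [j1 [hQ' [Jj1 [Qj1 eM]]]]] := notC_prime Mp hC.
      have Q'max : maximal_ideal Q' by apply: (lift2_max_inv (f:=f) (J:=J) hQ' Jj1 Qj1); rewrite -eM.
      exists 1%N, 0%N; split; last split => //.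
      - apply: (card_is1' _ _ Q'); apply/seteqP; split.
        + move=> Q'' [[Q''max [Q''p qQ'']] nJQ''].
          have [j' [Jj' Qj']] := Jneg _ (fun s => nJQ'' (conj Q''p s)).
          have e : M = lift2 Q''.
            apply: Mu; split; first exact: lift2_max Q''max Jj' Qj'.
            by move=> x; rewrite /lift2 /=; apply: qQ''.
          rewrite eM in e; rewrite /=; apply/seteqP; split.
          * by apply: (lift2_sub (f:=f) (J:=J) Q''p.1.1 hQ' Jj1 Qj1); rewrite e.
          * by apply: (lift2_sub (f:=f) (J:=J) hQ'.1.1 Q''p Jj' Qj'); rewrite e.
        + move=> _ ->; split; first split => //; first split => //.
          * by apply: (lift2_sub (f:=f) (J:=J) hq.1.1 hQ' Jj1 Qj1); rewrite -eM.
          * by move=> [_ h]; apply: Qj1; apply: h.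
      - apply: card_is0' => m' [m'max [_ sub]].
        have e : M = lift1 m'.
          apply: Mu; split; first exact: lift1_max.
          exact: lift2_sub_lift1 hq.1.1 sub.
        by apply: hC; rewrite e; apply: C_lift1 m'max.1.1.
- move=> [HR Hc] P hP.
  case: (pselect (C P)) => hC.
  + have pp := C_prime hP hC.
    have [m [[mmax pm] mu]] := HR _ pp.
    have eP := C_lift hP.1.1 hC.
    exists (lift1 m); split.
    * split; first exact: lift1_max.
      by rewrite eP => x; rewrite /lift1 /=; apply: pm.
    * move=> M' [M'max PM'].
      have hC' : C M' := fun x x1 => PM' _ (hC x x1).
      have e' := C_lift M'max.1.1 hC'.
      have -> : m = proj M'.
        apply: mu; split; first exact: C_max.
        by move=> r [x [Px <-]]; exists x; split => //; apply: PM'.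
      by rewrite -e'.
  + have [q [j [hq [Jj [qj eP]]]]] := notC_prime hP hC.
    have nJ : ~ (ideal_set J `<=` q) by move=> h; apply: qj; exact: h.
    have [n [k [Hn [Hk e]]]] := Hc q hq nJ.
    have [[en ek]|[en ek]] : ((n = 1 /\ k = 0) \/ (n = 0 /\ k = 1))%N.
      by clear Hn Hk; move: e; case: n => [|[|n]]; case: k => [|[|k]] //=; auto.
    * rewrite en in Hn; rewrite ek in Hk.
      have [Q [[[Qmax [Qp qQ]] nJQ] Qu]] := card_is1 _ _ Hn.
      have hY := card_is0 _ _ Hk.
      have [j' [Jj' Qj']] := Jneg _ (fun s => nJQ (conj Qp s)).
      exists (lift2 Q); split.
      - split; first exact: lift2_max Qmax Jj' Qj'.
        by rewrite eP => x; rewrite /lift2 /=; apply: qQ.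
      - move=> M' [M'max PM'].
        case: (pselect (C M')) => hC'.
        + exfalso; apply: (hY (proj M')); split; first exact: C_max.
          split; first exact: max_prime (C_max M'max hC').
          by apply: C_sub M'max.1.1 hC' _; rewrite -eP.
        + have [Q' [j1 [hQ' [Jj1 [Qj1 eM]]]]] := notC_prime (max_prime M'max) hC'.
          have Q'max : maximal_ideal Q' by apply: (lift2_max_inv (f:=f) (J:=J) hQ' Jj1 Qj1); rewrite -eM.
          have -> : Q = Q'.
            apply/esym/Qu; split; first split => //; first split => //.
            * by apply: (lift2_sub (f:=f) (J:=J) hq.1.1 hQ' Jj1 Qj1); rewrite -eM -eP.
            * by move=> [_ h]; apply: Qj1; apply: h.
          by rewrite eM.
    * rewrite en in Hn; rewrite ek in Hk.
      have [m [[mmax [mp sub]] mu]] := card_is1 _ _ Hk.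
      have hX := card_is0 _ _ Hn.
      exists (lift1 m); split.
      - split; first exact: lift1_max.
        by rewrite eP; exact: lift2_sub_lift1 hq.1.1 sub.
      - move=> M' [M'max PM'].
        case: (pselect (C M')) => hC'.
        + have e' := C_lift M'max.1.1 hC'.
          have <- : proj M' = m.
            apply: mu; split; first exact: C_max.
            split; first exact: max_prime (C_max M'max hC').
            by apply: C_sub M'max.1.1 hC' _; rewrite -eP.
          by rewrite -e'.
        + exfalso.
          have [Q' [j1 [hQ' [Jj1 [Qj1 eM]]]]] := notC_prime (max_prime M'max) hC'.
          have Q'max : maximal_ideal Q' by apply: (lift2_max_inv (f:=f) (J:=J) hQ' Jj1 Qj1); rewrite -eM.
          apply: (hX Q'); split; first split => //; first split => //.
          * by apply: (lift2_sub (f:=f) (J:=J) hq.1.1 hQ' Jj1 Qj1); rewrite -eM -eP.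
          * by move=> [_ h]; apply: Qj1; apply: h.
Qed.
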